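(* Let $\mathcal{T}$ be an MPQ-tree of an interval graph $G$, and let $S_1,\dots,S_k$ be the sections of some Q-node of $\mathcal{T}$; set $S_0=S_{k+1}=\emptyset$. For every pair of indices $1\le a<b\le k$ with $(a,b)\neq(1,k)$ there exists a vertex $$v\in\big((S_{a-1}\cap S_a)\setminus S_b\big)\cup\big((S_b\cap S_{b+1})\setminus S_a\big).$$
   Context: An MPQ-tree of an interval graph $G=(V,E)$, $V=\{1,\dots,n\}$, is a rooted plane tree whose nodes are P-nodes and Q-nodes. Each P-node carries a (possibly empty) set of vertices. A Q-node has $k\ge 3$ ordered positions $1,\dots,k$; position $i$ carries a set $S_i\subseteq V$ (the $i$-th section) and a child subtree $T_i$, which may be empty. Every vertex $v$ is assigned to exactly one node $node(v)$: either $v$ lies in the set of the P-node $node(v)$, or $node(v)$ is a Q-node and $v$ lies exactly in the sections $S_{l(v)},\dots,S_{r(v)}$ of it, with $l(v)<r(v)$. For a node with child subtrees $T_1,\dots,T_k$, $V_i$ denotes the set of vertices assigned to nodes of $T_i$ ($V_i=\emptyset$ if $T_i$ is empty). The maximal cliques of $G$ are in bijection with the descending paths from the root which at a P-node continue into one of its children (stopping if there is none) and at a Q-node choose a position $i$ and continue into $T_i$ (stopping if $T_i$ is empty); the clique is the union of the sets of the visited P-nodes and the chosen sections. Reading these cliques left to right gives a linear order of the maximal cliques, and the orders obtained this way after arbitrarily permuting children of P-nodes and reversing the positions of Q-nodes are exactly the orders of the maximal cliques of $G$ in which the cliques containing any fixed vertex are consecutive. Moreover, for every Q-node with sections $S_1,\dots,S_k$: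 (a) $V_1\neq\emptyset$ and $V_k\ne\emptyset$; (b) $S_1\subseteq S_2$ and $S_k\subseteq S_{k-1}$; (c) $S_{i-1}\cap S_i\neq\emptyset$ for $2\le i\le k$; (d) $S_{i-1}\neq S_i$ for $2\le i\le k$; (e) $(S_i\cap S_{i+1})\setminus S_1\neq\emptyset$ and $(S_{i-1}\cap S_i)\setminus S_k\neq\emptyset$ for $2\le i\le k-1$; (f) $(S_{i-1}\cup V_{i-1})\setminus S_i\neq\emptyset$ and $(S_i\cup V_i)\setminus S_{i-1}\neq\emptyset$ for $2\le i\le k$; and further (g) no empty P-node has an empty P-node as its parent, (h) no P-node has exactly one child whose root is a P-node, (i) every child subtree of a P-node is nonempty. *)

(* Defs.v *)
From mathcomp Require Import all_boot.
Set Implicit Arguments. Unset Strict Implicit. Unset Printing Implicit Defensive.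

Section MPQ.
Variable T : finType.

(* A P-node carries a vertex set and the ordered list
   of its (nonempty) child subtrees; a Q-node carries its positions 1..k, each
   position being a pair (section S_i, child subtree T_i), where None stands for
   an empty child subtree. *)
Inductive mpq : Type :=
| PN of {set T} & seq mpq
| QN of seq ({set T} * option mpq).

Fixpoint nodes (t : mpq) : seq mpq :=
  t :: match t with
       | PN _ ch => (fix ns l := if l is c :: l' then nodes c ++ ns l' else [::]) ch
       | QN pos => (fix nq (l : seq ({set T} * option mpq)) :=
                      if l is p :: l' then
                        (if p.2 is Some c then nodes c else [::]) ++ nq l'
                      else [::]) pos
       end.

Fixpoint inP (A : Type) (x : A) (s : seq A) : Prop :=
  if s is y :: s' then x = y \/ inP x s' else False.

Definition node_set (u : mpq) : {set T} :=
  match u with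
  | PN X _ => X
  | QN pos => \bigcup_(p <- pos) p.1
  end.

Definition node_has (v : T) (u : mpq) : bool := v \in node_set u.

Definition verts (t : mpq) : {set T} := \bigcup_(u <- nodes t) node_set u.

Definition verts_opt (o : option mpq) : {set T} :=
  if o is Some c then verts c else set0.

(* 1-based sections / child-vertex sets of a Q-node, with S_0 = S_{k+1} = set0 *)
Definition sec (pos : seq ({set T} * option mpq)) (i : nat) : {set T} :=
  if i is j.+1 then nth set0 (map fst pos) j else set0.
Definition vch (pos : seq ({set T} * option mpq)) (i : nat) : {set T} :=
  if i is j.+1 then verts_opt (nth None (map snd pos) j) else set0.

Definition isP (u : mpq) : bool := if u is PN _ _ then true else false.

Definition node_ok (u : mpq) : Prop :=
  match u with
  | PN X ch =>
      (X = set0 -> forall c, inP c ch -> isP c -> node_set c <> set0) /\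
      ~ (exists c, ch = [:: c] /\ isP c)
      (* (i) holds by construction: children of P-nodes are trees *)
  | QN pos =>
      let k := size pos in
      let S := sec pos in
      let V := vch pos in
      3 <= k /\
      (* each vertex of the Q-node lies in consecutive sections l(v) < r(v) *)
      (forall v i j l, 1 <= i -> i < j -> j < l -> l <= k ->
          v \in S i -> v \in S l -> v \in S j) /\
      (forall v i, v \in S i -> (v \in S i.-1) || (v \in S i.+1)) /\
      V 1 != set0 /\ V k != set0 /\
      S 1 \subset S 2 /\ S k \subset S k.-1 /\
      (forall i, 2 <= i <= k -> S i.-1 :&: S i != set0) /\
      (* (d) *) (forall i, 2 <= i <= k -> S i.-1 != S i) /\
      (* (e) *) (forall i, 2 <= i <= k.-1 ->
                   ((S i :&: S i.+1) :\: S 1 != set0) /\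
                   ((S i.-1 :&: S i) :\: S k != set0)) /\
      (forall i, 2 <= i <= k ->
                   ((S i.-1 :|: V i.-1) :\: S i != set0) /\
                   ((S i :|: V i) :\: S i.-1 != set0))
  end.

Fixpoint cliques (t : mpq) : seq {set T} :=
  match t with
  | PN X ch =>
      if ch is [::] then [:: X] else
      (fix cs l := if l is c :: l' then map (setU X) (cliques c) ++ cs l' else [::]) ch
  | QN pos =>
      (fix cq (l : seq ({set T} * option mpq)) :=
         if l is p :: l' then
           (if p.2 is Some c then map (setU p.1) (cliques c) else [:: p.1]) ++ cq l'
         else [::]) pos
  end.

(* orderP t o : o is a left-to-right reading of the cliques of t after
   arbitrarily permuting children of P-nodes and reversing Q-nodes. *)
Fixpoint orderP (t : mpq) (o : seq {set T}) : Prop :=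
  match t with
  | PN X ch =>
      if ch is [::] then o = [:: X] else
      exists os : seq (seq {set T}),
        (fix cr (l : seq mpq) (s : seq (seq {set T})) : Prop :=
           match l, s with
           | [::], [::] => True
           | c :: l', o1 :: s' => orderP c o1 /\ cr l' s'
           | _, _ => False
           end) ch os /\
        exists os', perm_eq os os' /\ o = flatten (map (map (setU X)) os')
  | QN pos =>
      exists os : seq (seq {set T}),
        (fix cq (l : seq ({set T} * option mpq)) (s : seq (seq {set T})) : Prop :=
           match l, s with
           | [::], [::] => True
           | p :: l', o1 :: s' =>
               (if p.2 is Some c then exists oc, orderP c oc /\ o1 = map (setU p.1) oc
                else o1 = [:: p.1]) /\ cq l' s'
           | _, _ => False
           end) pos os /\
        (o = flatten os \/ o = flatten (rev os))
  end.

Definition simple_graph (adj : rel T) : Prop :=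
  (forall x, ~~ adj x x) /\ (forall x y, adj x y = adj y x).

Definition cliqueb (adj : rel T) (K : {set T}) : bool :=
  [forall x in K, forall y in K, (x != y) ==> adj x y].

Definition maxcliqueb (adj : rel T) (K : {set T}) : bool :=
  cliqueb adj K && [forall y, (y \notin K) ==> ~~ cliqueb adj (y |: K)].

Definition consec_clique_order (adj : rel T) (o : seq {set T}) : Prop :=
  uniq o /\ (forall K, (K \in o) = maxcliqueb adj K) /\
  (forall v i j l, i < j -> j < l -> l < size o ->
     v \in nth set0 o i -> v \in nth set0 o l -> v \in nth set0 o j).

Definition is_MPQ_tree (adj : rel T) (t : mpq) : Prop :=
  (forall v, count (node_has v) (nodes t) = 1) /\
  (forall u, inP u (nodes t) -> node_ok u) /\
  uniq (cliques t) /\ (forall K, (K \in cliques t) = maxcliqueb adj K) /\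
  (forall o, orderP t o <-> consec_clique_order adj o).

End MPQ.

(* Main.v *)
Require Import Defs.
From mathcomp Require Import all_boot.
From mathcomp Require Import zify.
Set Implicit Arguments. Unset Strict Implicit. Unset Printing Implicit Defensive.
Section S.
Variable T : finType.
Notation mpq := (mpq T).
Notation pos_t := (seq ({set T} * option mpq)).

Lemma mpq_ind0 (P : mpq -> Prop) :
  (forall X ch, (forall c, inP c ch -> P c) -> P (PN X ch)) ->
  (forall pos : pos_t, (forall p, inP p pos -> if p.2 is Some c then P c else True) -> P (QN pos)) ->
  forall t, P t.
Proof.
move=> HP HQ; fix IH 1 => -[X ch|pos].
- apply: HP; elim: ch => [|c ch IHch] d /=; first by case.
  case=> [->|Hd]; first exact: IH.
  exact: IHch.
- apply: HQ; elim: pos => [|p pos IHp] d /=; first by case.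
  case=> [->|Hd]; last exact: IHp.
  case: p => S [c|] //=; exact: IH.
Qed.

Lemma mpq_ind' (P : mpq -> Prop) :
  (forall X ch, (forall c, inP c ch -> P c) -> P (PN X ch)) ->
  (forall pos : pos_t, (forall X c, inP (X, Some c) pos -> P c) -> P (QN pos)) ->
  forall t, P t.
Proof.
move=> HP HQ; apply: mpq_ind0 => // pos H; apply: HQ => X c /H //.
Qed.

Lemma nodesP (X : {set T}) ch : nodes (PN X ch) = PN X ch :: flatten (map (@nodes T) ch).
Proof. rewrite /=; congr (_ :: _); elim: ch => //= c ch ->. done. Qed.

Definition chn (p : {set T} * option mpq) := if p.2 is Some c then nodes c else [::].

Lemma nodesQ (pos : pos_t) : nodes (QN pos) = QN pos :: flatten (map chn pos).
Proof. rewrite /=; congr (_ :: _); elim: pos => //= p pos ->. done. Qed.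

Fixpoint F2 (A B : Type) (R : A -> B -> Prop) (l1 : seq A) (l2 : seq B) : Prop :=
  match l1, l2 with
  | [::], [::] => True
  | x :: l1', y :: l2' => R x y /\ F2 R l1' l2'
  | _, _ => False
  end.

Lemma F2_nth A B (R : A -> B -> Prop) l1 l2 d1 d2 : F2 R l1 l2 ->
  size l1 = size l2 /\ forall i, i < size l1 -> R (nth d1 l1 i) (nth d2 l2 i).
Proof.
elim: l1 l2 => [|x l1 IH] [|y l2] //= [Hr /IH [-> H]]; split=> // -[|i] //=.
by move=> /H.
Qed.

Fixpoint crP (l : seq mpq) (s : seq (seq {set T})) : Prop :=
  match l, s with
  | [::], [::] => True
  | c :: l', o1 :: s' => orderP c o1 /\ crP l' s'
  | _, _ => False
  end.

Lemma crPE l s : crP l s <-> F2 (@orderP T) l s.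
Proof. elim: l s => [|c l IH] [|o1 s] //=; split=> -[H1 H2]; split=> //; exact/IH. Qed.

Lemma orderPP (X : {set T}) c ch o : orderP (PN X (c :: ch)) o <->
  exists os, F2 (@orderP T) (c :: ch) os /\
    exists os', perm_eq os os' /\ o = flatten (map (map (setU X)) os').
Proof.
have -> : orderP (PN X (c :: ch)) o = exists os, crP (c :: ch) os /\
    exists os', perm_eq os os' /\ o = flatten (map (map (setU X)) os') by [].
split=> -[os [H1 H2]]; exists os; split=> //; apply/crPE => //.
Qed.

Lemma orderP0 (X : {set T}) o : orderP (PN X [::]) o <-> o = [:: X].
Proof. by []. Qed.

Definition Rq (p : {set T} * option mpq) (o1 : seq {set T}) : Prop :=
  if p.2 is Some c then exists oc, orderP c oc /\ o1 = map (setU p.1) oc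
  else o1 = [:: p.1].

Fixpoint cqP (l : pos_t) (s : seq (seq {set T})) : Prop :=
  match l, s with
  | [::], [::] => True
  | p :: l', o1 :: s' =>
      (if p.2 is Some c then exists oc, orderP c oc /\ o1 = map (setU p.1) oc
       else o1 = [:: p.1]) /\ cqP l' s'
  | _, _ => False
  end.

Lemma cqPE l s : cqP l s <-> F2 Rq l s.
Proof. elim: l s => [|c l IH] [|o1 s] //=; split=> -[H1 H2]; split=> //; exact/IH. Qed.

Lemma orderPQ (pos : pos_t) o : orderP (QN pos) o <->
  exists os, F2 Rq pos os /\ (o = flatten os \/ o = flatten (rev os)).
Proof.
have -> : orderP (QN pos) o =
  exists os, cqP pos os /\ (o = flatten os \/ o = flatten (rev os)) by [].
split=> -[os [H1 H2]]; exists os; split=> //; apply/cqPE => //.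
Qed.


Definition cnt (v : T) (s : mpq) := count (node_has v) (nodes s).
Definition cq (v : T) (p : {set T} * option mpq) := if p.2 is Some c then cnt v c else 0.

Lemma in_bigcup_seq (l : seq mpq) v :
  (v \in \bigcup_(u <- l) node_set u) = (0 < count (node_has v) l).
Proof.
elim: l => [|u l IH]; first by rewrite big_nil in_set0.
by rewrite big_cons in_setU IH /= /node_has; case: (v \in node_set u).
Qed.

Lemma in_verts v s : (v \in verts s) = (0 < cnt v s).
Proof. exact: in_bigcup_seq. Qed.

Lemma cntP v (X : {set T}) ch : cnt v (PN X ch) = (v \in X) + sumn (map (cnt v) ch).
Proof. by rewrite /cnt nodesP /= count_flatten -map_comp. Qed.

Lemma cntQ v (pos : pos_t) :
  cnt v (QN pos) = (v \in node_set (QN pos)) + sumn (map (cq v) pos).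
Proof.
rewrite /cnt nodesQ /= count_flatten -map_comp; congr (_ + sumn _).
by apply: eq_map => -[S [c|]].
Qed.

Lemma inP_nth (A : Type) (d : A) l i : i < size l -> inP (nth d l i) l.
Proof. elim: l i => [|x l IH] [|i] //= H; [by left| right; exact: IH]. Qed.

Lemma inP_nthE (A : Type) (d : A) (x : A) l : inP x l -> exists2 i, i < size l & x = nth d l i.
Proof.
elim: l => [|y l IH] //= [->|/IH [i Hi ->]]; first by exists 0.
by exists i.+1.
Qed.

Lemma inP_flatten (A B : Type) (f : A -> seq B) (d : A) x l :
  inP x (flatten (map f l)) -> exists2 i, i < size l & inP x (f (nth d l i)).
Proof.
elim: l => [|y l IH] //=.
have H : forall s1 s2 : seq B, inP x (s1 ++ s2) -> inP x s1 \/ inP x s2.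
  elim=> [|z s1 IH1] s2 /=; first by right.
  case=> [->|/IH1 [] ]; tauto.
case/H=> [Hx|/IH [i Hi Hx]]; first by exists 0.
by exists i.+1.
Qed.

Lemma inP_flattenI (A B : Type) (f : A -> seq B) x y l :
  inP y l -> inP x (f y) -> inP x (flatten (map f l)).
Proof.
have H : forall s1 s2 : seq B, inP x s1 \/ inP x s2 -> inP x (s1 ++ s2).
  elim=> [|z s1 IH1] s2 /=; first by case.
  move=> [[->|H1]|H2]; [by left| right; apply: IH1; auto | right; apply: IH1; auto].
elim: l => [|z l IH] //= [<- Hx|Hy Hx]; apply: H; auto.
Qed.

Lemma sumn_nth l i : nth 0 l i <= sumn l.
Proof. elim: l i => [|x l IH] [|i] //=; [exact: leq_addr | exact: leq_trans (IH i) (leq_addl _ _)]. Qed.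

Lemma sumn_nth2 l i j : i < j -> nth 0 l i + nth 0 l j <= sumn l.
Proof.
elim: l i j => [|x l IH] [|i] [|j] //=; rewrite ?nth_nil //.
- move=> _; rewrite leq_add2l; exact: sumn_nth.
- rewrite ltnS => /IH H; exact: leq_trans H (leq_addl _ _).
Qed.

Lemma sub_cnt v u s : inP u (nodes s) -> cnt v u <= cnt v s.
Proof.
elim/mpq_ind': s u => [X ch IH|pos IH] u.
- rewrite nodesP /= => -[->//|/(@inP_flatten _ _ (@nodes T) (PN X ch) u ch)[i Hi Hu]].
  rewrite cntP; apply: leq_trans (IH _ (inP_nth _ Hi) _ Hu) _.
  apply: leq_trans (leq_addl _ _).
  by have := sumn_nth (map (cnt v) ch) i; rewrite (nth_map (PN X ch)).
- rewrite nodesQ /= => -[->//|/(@inP_flatten _ _ chn (set0, None) u pos)[i Hi]].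
  rewrite cntQ /chn; case E: (nth _ pos i) => [S [c|]] //= Hu.
  have Hin : inP (S, Some c) pos by rewrite -E; exact: inP_nth.
  apply: leq_trans (IH _ _ Hin _ Hu) _.
  apply: leq_trans (leq_addl _ _).
  by have := sumn_nth (map (cq v) pos) i; rewrite (nth_map (set0, None)) // E.
Qed.


Lemma verts_sub (u s : mpq) : inP u (nodes s) -> verts u \subset verts s.
Proof. move=> H; apply/subsetP=> v; rewrite !in_verts => H1; exact: leq_trans H1 (sub_cnt v H). Qed.

Lemma node_verts (s : mpq) : node_set s \subset verts s.
Proof.
apply/subsetP=> v Hv; rewrite in_verts /cnt.
by case: s Hv => [X ch|pos] Hv; rewrite ?nodesP ?nodesQ /= /node_has Hv.
Qed.

Lemma inP_nodes (s : mpq) : inP s (nodes s).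
Proof. by case: s => [X ch|pos]; rewrite ?nodesP ?nodesQ; left. Qed.

Lemma childP_nodes (X : {set T}) ch c : inP c ch -> inP c (nodes (PN X ch)).
Proof. by move=> H; rewrite nodesP; right; apply: inP_flattenI H (inP_nodes c). Qed.

Lemma childQ_nodes (pos : pos_t) S c : inP (S, Some c) pos -> inP c (nodes (QN pos)).
Proof. by move=> H; rewrite nodesQ; right; apply: (inP_flattenI (y := (S, Some c))) H (inP_nodes c). Qed.

Lemma sec_sub (pos : pos_t) i : (nth (set0, None) pos i).1 \subset node_set (QN pos).
Proof.
elim: pos i => [|p pos IH] [|i] /=; rewrite ?big_nil ?big_cons ?sub0set ?subsetUl //.
exact: subset_trans (IH i) (subsetUr _ _).
Qed.

Lemma flatten_revP (A : eqType) (K : A) os :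
  (K \in flatten (rev os)) = (K \in flatten os).
Proof. by apply/flattenP/flattenP=> -[l Hl HK]; exists l; rewrite ?mem_rev in Hl *. Qed.

Lemma cliq_sub (s : mpq) o : orderP s o -> forall K, K \in o -> K \subset verts s.
Proof.
elim/mpq_ind': s o => [X ch IH|pos IH] o.
- case: ch IH => [|c ch] IH.
    by move=> /orderP0 -> K; rewrite inE => /eqP ->; exact: node_verts (PN X [::]).
  case/orderPP=> os [H1 [os' [Hp ->]]] K /flattenP [l' /mapP [l Hl ->] /mapP [K1 HK1 ->]].
  rewrite subUset; apply/andP; split; first exact: node_verts (PN X (c :: ch)).
  have Hl2 : l \in os by rewrite (perm_mem Hp).
  have [Hs Hn] := F2_nth (PN X [::]) [::] H1.
  have Hi : index l os < size (c :: ch) by rewrite Hs index_mem.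
  have := Hn _ Hi; rewrite nth_index // => Ho.
  apply: subset_trans (IH _ (inP_nth _ Hi) _ Ho _ HK1) _.
  apply: verts_sub; apply: childP_nodes; exact: inP_nth.
- case/orderPQ=> os [H1 Ho] K HK.
  have {HK} : K \in flatten os by case: Ho HK => ->; rewrite ?flatten_revP.
  case/flattenP=> l Hl HK.
  have [Hs Hn] := F2_nth (set0, None) [::] H1.
  have Hi : index l os < size pos by rewrite Hs index_mem.
  have := Hn _ Hi; rewrite nth_index // /Rq.
  have Hsec := subset_trans (sec_sub pos (index l os)) (node_verts (QN pos)).
  case E: (nth _ pos _) Hsec => [S [c|]] /= Hsec.
  + case=> oc [Hoc El]; move: HK; rewrite El => /mapP [K1 HK1 ->].
    rewrite subUset Hsec /=.
    have Hin : inP (S, Some c) pos by rewrite -E; exact: inP_nth.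
    apply: subset_trans (IH _ _ Hin _ Hoc _ HK1) _.
    apply: verts_sub; exact: childQ_nodes Hin.
  + by move=> El; move: HK; rewrite El inE => /eqP ->.
Qed.

Lemma orderP_ex (s : mpq) : exists o, orderP s o.
Proof.
elim/mpq_ind': s => [X ch IH|pos IH].
- case: ch IH => [|c ch] IH; first by exists [:: X].
  have [os Hos] : exists os, F2 (@orderP T) (c :: ch) os.
    elim: (c :: ch) IH => [|d l IHl] IH; first by exists [::].
    have [od Hd] := IH d (or_introl erefl).
    have [os Hos] := IHl (fun e He => IH e (or_intror He)).
    by exists (od :: os).
  exists (flatten (map (map (setU X)) os)); apply/orderPP; exists os; split=> //.
  by exists os.
- have [os Hos] : exists os, F2 Rq pos os.
    elim: pos IH => [|[S oc] l IHl] IH; first by exists [::].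
    have [os Hos] := IHl (fun X e He => IH X e (or_intror He)).
    case: oc IH => [c|] IH.
      have [od Hd] := IH S c (or_introl erefl).
      by exists (map (setU S) od :: os); split=> //; exists od.
    by exists ([:: S] :: os).
  by exists (flatten os); apply/orderPQ; exists os; split=> //; left.
Qed.


Lemma inP_nodes_trans (s c u : mpq) : inP c (nodes s) -> inP u (nodes c) -> inP u (nodes s).
Proof.
elim/mpq_ind': s c => [X ch IH|pos IH] c.
- rewrite nodesP /= => -[->|/(@inP_flatten _ _ (@nodes T) (PN X ch) c ch)[i Hi Hc]] Hu.
    by rewrite nodesP in Hu.
  right; apply: (inP_flattenI (y := nth (PN X ch) ch i)); first exact: inP_nth.
  exact: IH (inP_nth _ Hi) _ Hc Hu.
- rewrite nodesQ /= => -[->|/(@inP_flatten _ _ chn (set0, None) c pos)[i Hi]] Hu.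
    by rewrite nodesQ in Hu.
  move: Hu; rewrite /chn; case E: (nth (set0, None) pos i) => [S [d|]] //= Hcd Hu.
  have Hin : inP (S, Some d) pos by rewrite -E; exact: inP_nth.
  right; apply: (inP_flattenI (y := (S, Some d)) Hin).
  exact: IH _ _ Hin _ Hcd Hu.
Qed.

Definition okall (s : mpq) := forall u, inP u (nodes s) -> node_ok u.

Lemma okall_sub (s c : mpq) : okall s -> inP c (nodes s) -> okall c.
Proof. by move=> H Hc u Hu; apply: H; exact: inP_nodes_trans Hc Hu. Qed.

Lemma orderP_ne (s : mpq) o : okall s -> orderP s o -> exists K, K \in o.
Proof.
elim/mpq_ind': s o => [X ch IH|pos IH] o Hok.
- case: ch IH Hok => [|c ch] IH Hok; first by move=> /orderP0 ->; exists X; rewrite inE.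
  case/orderPP=> os [H1 [os' [Hp ->]]].
  case: os H1 Hp => [|oc os] //= [Hoc _] Hp.
  have Hc0 : inP c (c :: ch) by left.
  have [K HK] := IH c Hc0 oc (okall_sub Hok (childP_nodes X Hc0)) Hoc.
  exists (X :|: K); apply/flattenP; exists (map (setU X) oc); last by apply: map_f.
  by apply: map_f; rewrite -(perm_mem Hp) inE eqxx.
- case/orderPQ=> os [H1 Ho].
  have Hk : 3 <= size pos by have := Hok _ (inP_nodes _); case.
  have [Hs Hn] := F2_nth (set0, None) [::] H1.
  have Hi : 0 < size pos by apply: leq_trans Hk.
  have Hos : nth [::] os 0 \in os by rewrite mem_nth // -Hs.
  suff [K HK] : exists K, K \in nth [::] os 0.
    exists K; case: Ho => ->; rewrite ?flatten_revP; apply/flattenP; by exists (nth [::] os 0).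
  have := Hn _ Hi; rewrite /Rq.
  case E: (nth _ pos 0) => [S [c|]] /=.
  + case=> oc [Hoc ->].
    have Hin : inP (S, Some c) pos by rewrite -E; exact: inP_nth.
    have [K HK] := IH _ _ Hin oc (okall_sub Hok (childQ_nodes Hin)) Hoc.
    by exists (S :|: K); apply: map_f.
  + by move=> ->; exists S; rewrite inE.
Qed.


Definition Dj (A B : {set T}) := forall v, v \in A -> v \in B -> False.

Lemma split_at (A : Type) (x0 : A) s i : i < size s -> s = take i s ++ nth x0 s i :: drop i.+1 s.
Proof. by move=> Hi; rewrite -drop_nth // cat_take_drop. Qed.

Lemma in_take_nth (A : eqType) (x0 : A) s i l : l \in take i s -> exists2 j, j < i & l = nth x0 s j.
Proof.
case/(nthP x0)=> j; rewrite size_take_min leq_min => /andP [Hj _] <-; exists j => //.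
by rewrite nth_take.
Qed.

Lemma in_drop_nth (A : eqType) (x0 : A) s i l : l \in drop i s -> exists2 j, i <= j & l = nth x0 s j.
Proof. by case/(nthP x0)=> j Hj <-; exists (i + j); rewrite ?leq_addr ?nth_drop. Qed.

Lemma cq_verts v p : (0 < cq v p) = (v \in verts_opt p.2).
Proof. case: p => S [c|]; rewrite /cq /verts_opt /=; [exact/esym/in_verts | by rewrite in_set0]. Qed.

Lemma secE (pos : pos_t) j : sec pos j.+1 = (nth (set0, None) pos j).1.
Proof.
rewrite /sec; case: (ltnP j (size pos)) => H; first by rewrite (nth_map (set0, None)).
by rewrite !nth_default ?size_map.
Qed.

Lemma vchE (pos : pos_t) j : vch pos j.+1 = verts_opt (nth (set0, None) pos j).2.
Proof.
rewrite /vch; case: (ltnP j (size pos)) => H; first by rewrite (nth_map (set0, None)).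
by rewrite !nth_default ?size_map.
Qed.

Lemma cnt1_P (X : {set T}) ch i : (forall v, cnt v (PN X ch) <= 1) -> i < size ch ->
  Dj X (verts (nth (PN X ch) ch i)) /\
  forall j, j < size ch -> j != i -> Dj (verts (nth (PN X ch) ch j)) (verts (nth (PN X ch) ch i)).
Proof.
move=> H Hi; split.
  move=> v Hv; rewrite in_verts => Hc; have := H v; rewrite cntP Hv.
  have := sumn_nth (map (cnt v) ch) i; rewrite (nth_map (PN X ch)) //.
  by move=> /(leq_trans Hc) H1; rewrite add1n ltnS leqNgt H1.
move=> j Hj Hji v; rewrite !in_verts => H1 H2; have := H v; rewrite cntP.
have Hs : 2 <= sumn (map (cnt v) ch).
  case: (ltngtP i j) Hji => // Hij _.
  - have := sumn_nth2 (map (cnt v) ch) Hij; rewrite !(nth_map (PN X ch)) //.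
    by apply: leq_trans; rewrite -addn1 leq_add.
  - have := sumn_nth2 (map (cnt v) ch) Hij; rewrite !(nth_map (PN X ch)) //.
    by apply: leq_trans; rewrite -addn1 leq_add.
by move=> H3; have := leq_trans Hs (leq_trans (leq_addl _ _) H3).
Qed.

Lemma cnt1_Q (pos : pos_t) i S c : (forall v, cnt v (QN pos) <= 1) -> i < size pos ->
  nth (set0, None) pos i = (S, Some c) ->
  Dj (node_set (QN pos)) (verts c) /\
  forall j, j < size pos -> j != i -> Dj (vch pos j.+1) (verts c).
Proof.
move=> H Hi E; split.
  move=> v Hv; rewrite in_verts => Hc; have := H v; rewrite cntQ Hv.
  have := sumn_nth (map (cq v) pos) i; rewrite (nth_map (set0, None)) // E /cq /=.
  by move=> /(leq_trans Hc) H1; rewrite add1n ltnS leqNgt H1.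
move=> j Hj Hji v; rewrite vchE -cq_verts in_verts => H1 H2; have := H v; rewrite cntQ.
have Hc : 0 < cq v (nth (set0, None) pos i) by rewrite E.
have Hs : 2 <= sumn (map (cq v) pos).
  case: (ltngtP i j) Hji => // Hij _.
  - have := sumn_nth2 (map (cq v) pos) Hij; rewrite !(nth_map (set0, None)) //.
    by apply: leq_trans; rewrite -addn1 leq_add.
  - have := sumn_nth2 (map (cq v) pos) Hij; rewrite !(nth_map (set0, None)) //.
    by apply: leq_trans; rewrite -addn1 leq_add.
by move=> H3; have := leq_trans Hs (leq_trans (leq_addl _ _) H3).
Qed.


Section L.
Variable qp : pos_t.
Notation k := (size qp).
Notation W := (verts (QN qp)).
Definition sg (r : bool) i := if r then k.-1 - i else i.
Definition GS r (g : seq (seq {set T})) := forall i, i < k ->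
  (exists K, K \in nth [::] g i) /\
  forall K, K \in nth [::] g i -> exists2 K', K = sec qp (sg r i).+1 :|: K' & K' \subset vch qp (sg r i).+1.
Definition meetW (K : {set T}) := [exists v, (v \in K) && (v \in W)].

Lemma meetWP K : ~~ meetW K -> Dj K W.
Proof. by move=> /existsPn H v H1 H2; have := H v; rewrite H1 H2. Qed.

Lemma GSQ os : okall (QN qp) -> F2 Rq qp os -> forall j, j < k ->
  (exists K, K \in nth [::] os j) /\
  forall K, K \in nth [::] os j -> exists2 K', K = sec qp j.+1 :|: K' & K' \subset vch qp j.+1.
Proof.
move=> Hok H j Hj; have [Hs Hn] := F2_nth (set0, None) [::] H.
have := Hn _ Hj; rewrite /Rq secE vchE.
case E: (nth _ qp j) => [S [c|]] /=.
- case=> oc [Hoc ->].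
  have Hin : inP (S, Some c) qp by rewrite -E; exact: inP_nth.
  have [K HK] := orderP_ne (okall_sub Hok (childQ_nodes Hin)) Hoc.
  split; first by exists (S :|: K); apply: map_f.
  move=> K1 /mapP [K2 HK2 ->]; exists K2 => //; exact: cliq_sub Hoc _ HK2.
- move=> ->; split; first by exists S; rewrite inE.
  by move=> K; rewrite inE => /eqP ->; exists set0; rewrite ?setU0 ?sub0set.
Qed.

Lemma sec_ne j : node_ok (QN qp) -> 1 <= j <= k -> exists v, v \in sec qp j.
Proof.
case=> Hk [_ [_ [_ [_ [_ [_ [Hc _]]]]]]] /andP [H1 H2].
case: (ltnP 1 j) => Hj.
- have /set0Pn [v] := Hc j (introT andP (conj Hj H2)); rewrite inE => /andP [_ Hv]; by exists v.
- have Ej : j = 1 by apply/eqP; rewrite eqn_leq Hj H1.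
  have /set0Pn [v] := Hc 2 (introT andP (conj (leqnn 2) (ltnW Hk))).
  by rewrite inE Ej => /andP [Hv _]; exists v.
Qed.

Lemma L_meet r g X : node_ok (QN qp) -> size g = k -> GS r g ->
  exists2 K, K \in map (setU X) (flatten g) & meetW K.
Proof.
move=> Hok Hs HG.
have Hk : 0 < k by case: Hok => Hk _; apply: leq_trans Hk.
have [[K HK] H2] := HG 0 Hk.
have [K' EK _] := H2 K HK.
have Hr : 1 <= (sg r 0).+1 <= k by rewrite /sg; case: (r); lia.
have [v Hv] := sec_ne Hok Hr.
exists (X :|: K).
  apply: map_f; apply/flattenP; exists (nth [::] g 0) => //; rewrite mem_nth // Hs //.
rewrite /meetW; apply/existsP; exists v; rewrite EK !inE Hv orbT /=.
apply: (subsetP (node_verts (QN qp))); move: Hv; rewrite secE; exact: (subsetP (sec_sub qp _)).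
Qed.


Lemma map0U (l : seq {set T}) : map (setU set0) l = l.
Proof. by elim: l => //= K l ->; rewrite set0U. Qed.

Lemma mapU2 (X Y : {set T}) l : map (setU X) (map (setU Y) l) = map (setU (X :|: Y)) l.
Proof. by rewrite -map_comp; apply: eq_map => K /=; rewrite setUA. Qed.

Lemma Lmain (s : mpq) o : (forall v, cnt v s <= 1) -> okall s -> inP (QN qp) (nodes s) -> orderP s o ->
  exists pre suf X g r, o = pre ++ map (setU X) (flatten g) ++ suf /\ size g = k /\
   (forall K, K \in pre ++ suf -> Dj K W) /\ Dj X W /\ GS r g.
Proof.
elim/mpq_ind': s o => [X ch IH | pos IH] o Hc Hok Hin.
- move: Hin; rewrite nodesP /= => -[//|/(@inP_flatten _ _ (@nodes T) (PN X ch) _ ch) [i Hi HQ]].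
  case: ch IH Hc Hok Hi HQ => [//|c0 ch0]; set ch := c0 :: ch0 => IH Hc Hok Hi HQ.
  case/orderPP=> os [H1 [os' [Hp ->]]].
  set c := nth (PN X ch) ch i in HQ.
  have [Hs Hn] := F2_nth (PN X ch) [::] H1.
  have Hci : inP c (nodes (PN X ch)) := childP_nodes X (inP_nth _ Hi).
  have HokQ : node_ok (QN qp) := Hok _ (inP_nodes_trans Hci HQ).
  have [pre_c [suf_c [Xc [g [r [Eoc [Hg [Hps [HX HG]]]]]]]]] :=
    IH c (inP_nth _ Hi) (nth [::] os i) (fun v => leq_trans (sub_cnt v Hci) (Hc v))
       (okall_sub Hok Hci) HQ (Hn i Hi).
  have [HXc Hdj] := cnt1_P Hc Hi.
  have WsubC : W \subset verts c := verts_sub HQ.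
  have Hone : forall j, j < size os -> has meetW (nth [::] os j) -> j = i.
    move=> j Hj /hasP [K HK /existsP [v /andP [Hv1 Hv2]]].
    case: (eqVneq j i) => // Hji; exfalso.
    have Hj' : j < size ch by rewrite Hs.
    have HKs := cliq_sub (Hn j Hj') HK.
    exact: Hdj j Hj' Hji v (subsetP HKs v Hv1) (subsetP WsubC v Hv2).
  have Hi' : i < size os by rewrite -Hs.
  have Hoc : has meetW (nth [::] os i).
    have [K HK HKm] := L_meet Xc HokQ Hg HG.
    by apply/hasP; exists K => //; rewrite Eoc !mem_cat HK orbT.
  have Hcnt : count (has meetW) os = 1.
    rewrite (split_at [::] Hi') count_cat /= Hoc.
    have -> : count (has meetW) (take i os) = 0.
      apply/eqP; rewrite -leqn0 leqNgt -has_count; apply/hasPn => l /(in_take_nth [::]) [j Hj ->].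
      by apply/negP => /(Hone j (ltn_trans Hj Hi')) Eji; rewrite Eji ltnn in Hj.
    have -> : count (has meetW) (drop i.+1 os) = 0.
      apply/eqP; rewrite -leqn0 leqNgt -has_count; apply/hasPn => l /(in_drop_nth [::]) [j Hj ->].
      apply/negP => Hm; case: (ltnP j (size os)) => Hj2.
        by move: (Hone j Hj2 Hm) Hj => ->; rewrite ltnn.
      by move: Hm; rewrite nth_default.
    by [].
  have Hoc' : nth [::] os i \in os' by rewrite -(perm_mem Hp) mem_nth.
  set m := index (nth [::] os i) os'.
  have Hm : m < size os' by rewrite index_mem.
  have Eos' := split_at [::] Hm; rewrite nth_index // in Eos'.
  have := Hcnt; rewrite (permP Hp) Eos' count_cat /= Hoc add1n addnS => /eqP.
  rewrite eqSS addn_eq0 => /andP [/eqP HA /eqP HB].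
  have HA' : forall l, l \in take m os' -> ~~ has meetW l.
    by apply/hasPn; rewrite has_count HA.
  have HB' : forall l, l \in drop m.+1 os' -> ~~ has meetW l.
    by apply/hasPn; rewrite has_count HB.
  clearbody m; move: Eos' HA' HB'; move: (take m os') (drop m.+1 os') => A B Eos' HA' HB'.
  have HXW : Dj X W by move=> v Hv1 Hv2; exact: HXc v Hv1 (subsetP WsubC v Hv2).
  exists (flatten (map (map (setU X)) A) ++ map (setU X) pre_c).
  exists (map (setU X) suf_c ++ flatten (map (map (setU X)) B)).
  exists (X :|: Xc), g, r.
  split; first by rewrite map_cat flatten_cat /= Eoc !map_cat mapU2 -!catA.
  split=> //; split; last split=> //.
    move=> K; rewrite !mem_cat => /orP [/orP [|] | /orP [|]].
    + case/flattenP=> l' /mapP [l Hl ->] /mapP [K1 HK1 ->] v; rewrite inE => /orP [Hv|Hv].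
        exact: HXW.
      by move/hasPn: (HA' l Hl) => H; exact: meetWP (H K1 HK1) v Hv.
    + case/mapP=> K1 HK1 -> v; rewrite inE => /orP [Hv|Hv]; first exact: HXW.
      by apply: (Hps K1 _ v Hv); rewrite mem_cat HK1.
    + case/mapP=> K1 HK1 -> v; rewrite inE => /orP [Hv|Hv]; first exact: HXW.
      by apply: (Hps K1 _ v Hv); rewrite mem_cat HK1 orbT.
    + case/flattenP=> l' /mapP [l Hl ->] /mapP [K1 HK1 ->] v; rewrite inE => /orP [Hv|Hv].
        exact: HXW.
      by move/hasPn: (HB' l Hl) => H; exact: meetWP (H K1 HK1) v Hv.
  by move=> v; rewrite inE => /orP [Hv|Hv]; [exact: HXW | exact: HX].
- move: Hin; rewrite nodesQ /= => -[E|/(@inP_flatten _ _ chn (set0, None) _ pos) [i Hi HQ]].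
    case: E => Epos; subst pos.
    case/orderPQ=> os [H1 Ho].
    have Hs := (F2_nth (set0, None) [::] H1).1.
    have HG0 := GSQ Hok H1.
    case: Ho => ->.
    + exists [::], [::], set0, os, false; split; first by rewrite /= cats0 map0U.
      split; first by rewrite Hs.
      split; first by [].
      split; first by move=> v; rewrite in_set0.
      by move=> j Hj; exact: HG0.
    + exists [::], [::], set0, (rev os), true; split; first by rewrite /= cats0 map0U.
      split; first by rewrite size_rev Hs.
      split; first by [].
      split; first by move=> v; rewrite in_set0.
      move=> j Hj; rewrite nth_rev -?Hs // /sg.
      have -> : k - j.+1 = k.-1 - j by lia.
      by apply: HG0; lia.
  move: HQ; rewrite /chn; case E: (nth (set0, None) pos i) => [S [c|]] //= HQ.
  have Hin' : inP (S, Some c) pos by rewrite -E; exact: inP_nth.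
  have Hci : inP c (nodes (QN pos)) := childQ_nodes Hin'.
  case/orderPQ=> os [H1 Ho].
  have [Hs Hn] := F2_nth (set0, None) [::] H1.
  have := Hn i Hi; rewrite /Rq E /= => -[oc [Hoc Eos_i]].
  have [pre_c [suf_c [Xc [g [r [Eoc [Hg [Hps [HX HG]]]]]]]]] :=
    IH S c Hin' oc (fun v => leq_trans (sub_cnt v Hci) (Hc v)) (okall_sub Hok Hci) HQ Hoc.
  have [HNc Hdj] := cnt1_Q Hc Hi E.
  have WsubC : W \subset verts c := verts_sub HQ.
  have Hother : forall j, j < size os -> j != i -> forall K, K \in nth [::] os j -> Dj K W.
    move=> j Hj Hji K HK v Hv HvW.
    have Hj' : j < size pos by rewrite Hs.
    have HvC := subsetP WsubC v HvW.
    have HS2 := sec_sub pos j.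
    have := Hn j Hj'; rewrite /Rq.
    move: (Hdj j Hj' Hji) HS2; rewrite vchE.
    case: (nth (set0, None) pos j) => S2 [c2|] /= Hd2 HS2.
    * case=> oc2 [Hoc2 E2]; move: HK; rewrite E2 => /mapP [K1 HK1 EK]; move: Hv; rewrite EK inE => /orP [Hv|Hv].
        exact: HNc v (subsetP HS2 v Hv) HvC.
      exact: Hd2 v (subsetP (cliq_sub Hoc2 HK1) v Hv) HvC.
    * move=> E2; move: HK; rewrite E2 inE => /eqP EK; rewrite EK in Hv.
      exact: HNc v (subsetP HS2 v Hv) HvC.
  have Hi' : i < size os by rewrite -Hs.
  have HT : forall K, K \in flatten (take i os) -> Dj K W.
    move=> K /flattenP [l /(in_take_nth [::]) [j Hj ->] HK].
    apply: (Hother j) HK; [exact: ltn_trans Hj Hi' | by rewrite neq_ltn Hj].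
  have HD : forall K, K \in flatten (drop i.+1 os) -> Dj K W.
    move=> K /flattenP [l /(in_drop_nth [::]) [j Hj ->] HK].
    case: (ltnP j (size os)) => Hj2; last by move: HK; rewrite nth_default.
    apply: (Hother j Hj2) HK; by rewrite neq_ltn orbC -ltnS ltnS Hj.
  have HSW : Dj S W.
    move=> v Hv HvW; apply: (HNc v _ (subsetP WsubC v HvW)).
    by move: (sec_sub pos i); rewrite E => /subsetP; apply.
  have HXW : Dj (S :|: Xc) W by move=> v; rewrite inE => /orP [Hv|Hv]; [exact: HSW | exact: HX].
  have Hps' : forall K, K \in pre_c ++ suf_c -> Dj (S :|: K) W.
    by move=> K HK v; rewrite inE => /orP [Hv|Hv]; [exact: HSW | exact: (Hps K HK v Hv)].
  have Esplit := split_at [::] Hi'.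
  case: Ho => ->.
  + exists (flatten (take i os) ++ map (setU S) pre_c), (map (setU S) suf_c ++ flatten (drop i.+1 os)).
    exists (S :|: Xc), g, r.
    split; first by rewrite {1}Esplit flatten_cat /= Eos_i Eoc !map_cat mapU2 -!catA.
    split=> //; split=> // K; rewrite !mem_cat => /orP [/orP [/HT|/mapP [K1 HK1 ->]]|/orP [/mapP [K1 HK1 ->]|/HD]] //.
    * by apply: Hps'; rewrite mem_cat HK1.
    * by apply: Hps'; rewrite mem_cat HK1 orbT.
  + exists (flatten (rev (drop i.+1 os)) ++ map (setU S) pre_c), (map (setU S) suf_c ++ flatten (rev (take i os))).
    exists (S :|: Xc), g, r.
    split; first by rewrite {1}Esplit rev_cat rev_cons cat_rcons flatten_cat /= Eos_i Eoc !map_cat mapU2 -!catA.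
    split=> //; split=> // K; rewrite !mem_cat ?flatten_revP => /orP [/orP [/HD|/mapP [K1 HK1 ->]]|/orP [/mapP [K1 HK1 ->]|/HT]] //.
    * by apply: Hps'; rewrite mem_cat HK1.
    * by apply: Hps'; rewrite mem_cat HK1 orbT.
Qed.

End L.

End S.


Section Cmp.
Variable A : eqType.
Fixpoint cmp (s : seq A) : seq A :=
  match s with
  | [::] => [::]
  | x :: s' => match s' with
               | [::] => [:: x]
               | y :: _ => if x == y then cmp s' else x :: cmp s'
               end
  end.

Lemma cmp_cons x s : cmp (x :: s) =
  (if s is y :: _ then (if x == y then cmp s else x :: cmp s) else [:: x]).
Proof. by []. Qed.

Lemma cmp_nseq m x s : 0 < m -> cmp (nseq m x ++ s) = cmp (x :: s).
Proof.
case: m => // m _; elim: m => // m IH.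
have E : nseq m.+2 x ++ s = x :: (nseq m.+1 x ++ s) by [].
have E2 : nseq m.+1 x ++ s = x :: (nseq m x ++ s) by []. by rewrite E cmp_cons E2 eqxx -E2 IH.
Qed.

Lemma cmp_flatten (I : eqType) (l : seq I) (m : I -> nat) (x : I -> A) :
  (forall i, i \in l -> 0 < m i) ->
  cmp (flatten (map (fun i => nseq (m i) (x i)) l)) = cmp (map x l) /\
  ohead (flatten (map (fun i => nseq (m i) (x i)) l)) = ohead (map x l).
Proof.
elim: l => [|i l IH] Hm //=.
have [IH1 IH2] := IH (fun j Hj => Hm j (@mem_behead _ (i :: l) _ Hj)).
split; last by have := Hm i (mem_head _ _); case: (m i).
rewrite cmp_nseq ?Hm ?mem_head // !cmp_cons.
move: (flatten _) (map x l) IH1 IH2 => F M H1 H2.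
case: F H1 H2 => [|y F]; case: M => [|z M] H1 H2; try discriminate; first by [].
case: H2 => Ey; subst z; by rewrite H1.
Qed.

Lemma cmp_size s : cmp s = s \/ size (cmp s) < size s.
Proof.
elim: s => [|x s IH]; first by left.
rewrite cmp_cons; case: s IH => [|y s] IH; first by left.
case: ifP => _.
  by right; case: IH => [->|H] //; apply: ltn_trans H _.
by case: IH => [->|H]; [left | right; rewrite /= ltnS].
Qed.


Lemma cmp_id x0 s : (forall i, i.+1 < size s -> nth x0 s i != nth x0 s i.+1) -> cmp s = s.
Proof.
elim: s => [|x s IH] // H; rewrite cmp_cons.
case: s IH H => [|y s] IH H //.
have Hxy : (x == y) = false by apply/negbTE; exact: (H 0 isT).
rewrite Hxy IH //.
by move=> i Hi; apply: (H i.+1).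
Qed.
End Cmp.

Definition convex (b : seq bool) := forall i j l, i < j -> j < l -> l < size b ->
  nth false b i -> nth false b l -> nth false b j.

Lemma nth_pad x y (s : seq bool) t :
  nth false (nseq x false ++ s ++ nseq y false) t = (x <= t) && nth false s (t - x).
Proof.
rewrite nth_cat size_nseq; case: ltnP => Ht; first by rewrite nth_nseq Ht.
rewrite nth_cat; case: ltnP => H2 //.
by rewrite nth_nseq if_same nth_default.
Qed.

Lemma nth_revb (m : seq bool) u : nth false (rev m) u = (u < size m) && nth false m (size m - u.+1).
Proof. by case: ltnP => H; [rewrite nth_rev | rewrite nth_default // size_rev]. Qed.

Lemma conv_rev p m q : convex (p ++ m ++ q) ->
  (has id m -> has id (p ++ q) -> all id m) -> convex (p ++ rev m ++ q).
Proof.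
move=> Hc H.
case Hm: (has id m).
  case Hpq: (has id (p ++ q)).
    have Ha := H Hm Hpq.
    have : all (pred1 true) m by apply: sub_all Ha => b /= ->.
    by move/all_pred1P => E; rewrite E rev_nseq -E.
  move/negbT: Hpq; rewrite has_cat negb_or => /andP [Hp Hq].
  have Ep : p = nseq (size p) false.
    by apply/all_pred1P; apply/allP => b Hb; apply/eqP; apply: negbTE; apply: (hasPn Hp).
  have Eq : q = nseq (size q) false.
    by apply/all_pred1P; apply/allP => b Hb; apply/eqP; apply: negbTE; apply: (hasPn Hq).
  move: Hc; rewrite Ep Eq; set x := size p; set y := size q => Hc.
  move=> i j l Hij Hjl; rewrite !size_cat !size_nseq size_rev => Hl.
  rewrite !nth_pad !nth_revb => /andP [Hxi /andP [Hi Hbi]] /andP [Hxl /andP [Hl2 Hbl]].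
  have Hxj : x <= j by apply: leq_trans Hxi (ltnW Hij).
  have Hj : j - x < size m by lia.
  rewrite Hxj Hj /=.
  have := Hc (x + (size m - (l - x).+1)) (x + (size m - (j - x).+1)) (x + (size m - (i - x).+1)).
  rewrite !nth_pad !size_cat !size_nseq !leq_addr /= !addKn; apply; try lia; done.
have : all (pred1 false) m by apply/allP => b Hb; apply/eqP; apply: negbTE; apply: (hasPn (negbT Hm)).
by move/all_pred1P => E; rewrite E rev_nseq -E.
Qed.


Section Fin.
Variable T : finType.
Variable qp : seq ({set T} * option (mpq T)).
Notation k := (size qp).
Notation S := (sec qp).
Notation V := (vch qp).
Notation N := (node_set (QN qp)).
Notation W := (verts (QN qp)).
Hypothesis Hc1 : forall v, cnt v (QN qp) <= 1.
Hypothesis Hok : node_ok (QN qp).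

Lemma secN j : S j \subset N.
Proof. case: j => [|j]; first by rewrite /sec sub0set. by rewrite secE; exact: sec_sub. Qed.

Lemma secW j : S j \subset W.
Proof. exact: subset_trans (secN j) (node_verts _). Qed.

Lemma vchW j : V j \subset W.
Proof.
case: j => [|j]; first by rewrite /vch sub0set.
rewrite vchE; case: (ltnP j k) => Hj; last by rewrite nth_default //= sub0set.
case E: (nth _ qp j) => [X [c|]]; last by rewrite sub0set.
apply: verts_sub; apply: (childQ_nodes (S := X)); rewrite -E; exact: inP_nth.
Qed.

Lemma vchN j : Dj N (V j.+1) /\ forall j', j' != j -> Dj (V j'.+1) (V j.+1).
Proof.
rewrite vchE; case: (ltnP j k) => Hj; last first.
  by rewrite nth_default //; split=> [v _|j' _ v _]; rewrite in_set0.
case E: (nth _ qp j) => [X [c|]]; last by split=> [v _|j' _ v _]; rewrite /= in_set0.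
have [H1 H2] := cnt1_Q Hc1 Hj E; split=> // j' Hj'.
case: (ltnP j' k) => Hj2; first exact: H2.
by rewrite vchE nth_default // => v; rewrite in_set0.
Qed.

Definition F (o : seq {set T}) := map (fun K => K :&: N) (filter (fun K => K :&: N != set0) o).

Lemma F_cat o1 o2 : F (o1 ++ o2) = F o1 ++ F o2.
Proof. by rewrite /F filter_cat map_cat. Qed.

Lemma F_rev o : F (rev o) = rev (F o).
Proof. by rewrite /F filter_rev map_rev. Qed.

Lemma F_nil o : (forall K, K \in o -> Dj K W) -> F o = [::].
Proof.
elim: o => [|K o IH] // H; rewrite /F /=.
have -> : K :&: N == set0.
  apply/eqP/setP => v; rewrite !inE; apply/negP => /andP [H1 H2].
  exact: H K (mem_head _ _) v H1 (subsetP (node_verts _) v H2).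
by apply: IH => K1 HK1; apply: H; rewrite inE HK1 orbT.
Qed.

Lemma F_flatten (I : Type) (h : I -> seq {set T}) l : F (flatten (map h l)) = flatten (map (fun i => F (h i)) l).
Proof. by elim: l => //= i l IH; rewrite F_cat IH. Qed.

Lemma F_group X l j : Dj X W -> j < k ->
  (forall K, K \in l -> exists2 K', K = S j.+1 :|: K' & K' \subset V j.+1) ->
  F (map (setU X) l) = nseq (size l) (S j.+1).
Proof.
move=> HX Hj; elim: l => [|K l IH] // H.
have [K' EK HK'] := H K (mem_head _ _).
have E : (X :|: K) :&: N = S j.+1.
  apply/setP => v; rewrite EK !inE.
  case Hv: (v \in S j.+1); first by rewrite orbT /= (subsetP (secN j.+1) v Hv).
  apply/negP => /andP [H12 H2].
  have [H1|H1] : v \in X \/ v \in K' by move: H12; case: (v \in X); case: (v \in K'); auto.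
    exact: HX v H1 (subsetP (node_verts _) v H2).
  exact: (vchN j).1 v H2 (subsetP HK' v H1).
have Hr : 1 <= j.+1 <= k by apply/andP. have [v Hv] := sec_ne Hok Hr.
have -> : nseq (size (K :: l)) (S j.+1) = S j.+1 :: nseq (size l) (S j.+1) by [].
rewrite /F map_cons [filter _ (_ :: _)]/= E ifT; last by apply/set0Pn; exists v.
rewrite map_cons E; congr (_ :: _); rewrite -IH // => K1 HK1; apply: H; rewrite inE HK1 orbT //.
Qed.


Lemma palin n lo hi : hi - lo <= n -> 1 <= lo -> lo < hi -> hi <= k ->
  (forall j, lo <= j <= hi -> S (lo + hi - j) = S j) -> False.
Proof.
move: Hok => [_ [Hcons [H2s [_ [_ [_ [_ [_ [Hd _]]]]]]]]].
elim: n lo hi => [|n IH] lo hi Hn H1 Hlh Hhk H; first lia.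
case: (ltnP (lo.+2) hi) => Hbig.
  apply: (IH lo.+1 hi.-1); try lia.
  move=> j Hj; have := H j; rewrite (_ : lo.+1 + hi.-1 - j = lo + hi - j); last lia.
  by apply; lia.
case: (eqVneq hi lo.+1) => Eh.
  have := H lo; rewrite (_ : lo + hi - lo = hi); last lia.
  move=> /(_ (introT andP (conj (leqnn lo) (ltnW Hlh)))) E.
  have := Hd hi; rewrite E (_ : hi.-1 = lo); last lia.
  rewrite eqxx => H0; suff : false by []. apply: H0; lia.
have Eh2 : hi = lo.+2 by lia.
subst hi.
have E : S lo = S lo.+2.
  have := H lo; rewrite (_ : lo + lo.+2 - lo = lo.+2); last lia.
  by move=> /(_ (introT andP (conj (leqnn lo) (ltnW Hlh)))) ->.
have Hne : S lo.+1 != S lo.+2 by apply: Hd; lia.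
have [w Hw] : exists w, (w \in S lo.+1) != (w \in S lo).
  case: (boolP [exists w, (w \in S lo.+1) != (w \in S lo)]) => [/existsP //|/existsPn Hall].
  move: Hne; rewrite -E => /eqP []; apply/setP => w.
  by have := Hall w; rewrite negbK => /eqP.
case Hw1: (w \in S lo.+1) Hw; case Hw2: (w \in S lo) => //= _.
- by have := H2s w lo.+1 Hw1; rewrite -[lo.+1.-1]/lo -[lo.+1.+1]/lo.+2 -E Hw2.
- have Hw3 : w \in S lo.+2 by rewrite -E.
  by have := Hcons w lo lo.+1 lo.+2 H1 (ltnSn _) (ltnSn _) Hhk Hw2 Hw3; rewrite Hw1.
Qed.

Lemma S1k : S 1 = S k -> False.
Proof.
move: Hok => [Hk [_ [_ [_ [_ [Hb1 [_ [_ [_ [He _]]]]]]]]]] E.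
have H2 : 1 < 2 <= k.-1 by apply/andP; split => //; lia.
have := (He 2 H2).2.
rewrite /= -E; case/set0Pn => v; rewrite !inE => /andP [Hv1 /andP [Hv2 _]].
by rewrite Hv2 in Hv1.
Qed.

Lemma block_ok a b v j j' : 1 <= a -> a <= b -> b <= k ->
  (forall v, v \in S a.-1 -> v \in S a -> v \in S b) ->
  (forall v, v \in S b -> v \in S b.+1 -> v \in S a) ->
  1 <= j' <= k -> a <= j <= b -> ~~ (a <= j' <= b) -> v \in S j -> v \in S j' ->
  forall j2, a <= j2 <= b -> v \in S j2.
Proof.
move: Hok => [_ [Hcons _]] Ha Hab Hbk NW NW2 Hj' Hj Hnj Hv Hv' j2 Hj2.
have [HA HB] : v \in S a /\ v \in S b.
  case: (ltnP j' a) => Hja.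
  - have HA1 : v \in S a.-1.
      case: (eqVneq j' a.-1) => [<-//|Hne]; apply: (Hcons v j' a.-1 j); lia.
    have HA : v \in S a.
      case: (eqVneq j a) => [<-//|Hne]; apply: (Hcons v j' a j); lia.
    by split=> //; exact: NW HA1 HA.
  - have Hjb : b < j' by lia.
    have HB1 : v \in S b.+1.
      case: (eqVneq j' b.+1) => [<-//|Hne]; apply: (Hcons v j b.+1 j'); lia.
    have HB : v \in S b.
      case: (eqVneq j b) => [<-//|Hne]; apply: (Hcons v j b j'); lia.
    by split=> //; exact: NW2 HB HB1.
case: (eqVneq j2 a) => [->//|Hn1]; case: (eqVneq j2 b) => [->//|Hn2].
apply: (Hcons v a j2 b); lia.
Qed.

End Fin.


Definition sgk (k : nat) (r : bool) i := if r then k.-1 - i else i.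
Definition lob k a b (r : bool) := if r then k - b else a.-1.
Definition hib k a b (r : bool) := if r then k - a else b.-1.
Definition pig k a b r p := if lob k a b r <= p <= hib k a b r then lob k a b r + hib k a b r - p else p.

Lemma blk k a b r i : 1 <= a -> a <= b -> b <= k -> i < k ->
  (lob k a b r <= i <= hib k a b r) = (a <= (sgk k r i).+1 <= b).
Proof. by move=> *; case: r; rewrite /lob /hib /sgk; apply/andP/andP; lia. Qed.

Lemma sgk_lt k r i : i < k -> sgk k r i < k.
Proof. by case: r; rewrite /sgk; lia. Qed.

Lemma lohi k a b r : 1 <= a -> a < b -> b <= k -> lob k a b r <= hib k a b r < k.
Proof. by move=> *; case: r; rewrite /lob /hib; apply/andP; lia. Qed.

Lemma A1 k a b r j : 1 <= a -> a < b -> b <= k -> a <= j <= b ->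
  (sgk k r (pig k a b r (sgk k r j.-1))).+1 = a + b - j /\ (sgk k r (sgk k r j.-1)).+1 = j /\ sgk k r j.-1 < k.
Proof.
move=> *; rewrite /pig; case: ifP => H; move: H; case: r; rewrite /lob /hib /sgk /=;
  try (move/andP; lia); move/negbT; rewrite negb_and -!ltnNge => /orP; lia.
Qed.

Lemma A2 k a b r : 2 <= a -> a < b -> b <= k ->
  (sgk k r (pig k a b r (sgk k r 0))).+1 = 1 /\ (sgk k (~~ r) (sgk k r 0)).+1 = k /\ sgk k r 0 < k.
Proof.
move=> *; rewrite /pig; case: ifP => H; move: H; case: r; rewrite /lob /hib /sgk /=;
  try (move/andP; lia); move/negbT; rewrite negb_and -!ltnNge => /orP; lia.
Qed.

Lemma nthLz lo hi k p : lo <= hi < k -> p < k ->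
  nth 0 (iota 0 lo ++ rev (iota lo (hi.+1 - lo)) ++ iota hi.+1 (k - hi.+1)) p =
  if lo <= p <= hi then lo + hi - p else p.
Proof.
move=> /andP [H1 H2] Hp.
rewrite nth_cat size_iota; case: ltnP => Hlo.
  by rewrite nth_iota // ifF //; apply/negbTE; rewrite negb_and -ltnNge Hlo.
rewrite nth_cat size_rev size_iota; case: ltnP => Hmid.
  rewrite nth_rev ?size_iota // nth_iota; last lia.
  rewrite ifT; last by apply/andP; lia.
  lia.
rewrite nth_iota; last lia.
rewrite ifF; last by apply/negbTE; rewrite negb_and -!ltnNge; apply/orP; lia.
lia.
Qed.

Lemma iota3 lo hi k : lo <= hi.+1 -> hi.+1 <= k ->
  iota 0 k = iota 0 lo ++ iota lo (hi.+1 - lo) ++ iota hi.+1 (k - hi.+1).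
Proof.
move=> H1 H2; rewrite -{1}(subnKC H2) iotaD -{1}(subnKC H1) iotaD add0n -catA.
by rewrite add0n.
Qed.

Section Main.
Variable T : finType.

Lemma conv_of (o : seq {set T}) :
  (forall v i j l, i < j -> j < l -> l < size o -> v \in nth set0 o i -> v \in nth set0 o l -> v \in nth set0 o j) ->
  forall v : T, convex (map (fun K : {set T} => v \in K) o).
Proof.
move=> H v i j l Hij Hjl; rewrite size_map => Hl.
rewrite !(nth_map set0) //; try lia; exact: H.
Qed.

Lemma of_conv (o : seq {set T}) : (forall v : T, convex (map (fun K : {set T} => v \in K) o)) ->
  (forall v i j l, i < j -> j < l -> l < size o -> v \in nth set0 o i -> v \in nth set0 o l -> v \in nth set0 o j).
Proof.
move=> H v i j l Hij Hjl Hl; have := H v i j l Hij Hjl; rewrite size_map !(nth_map set0) //; try lia.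
Qed.

Lemma rev_flat_nseq (I : Type) (m : I -> nat) (x : I -> {set T}) l :
  rev (flatten (map (fun i => nseq (m i) (x i)) l)) = flatten (map (fun i => nseq (m i) (x i)) (rev l)).
Proof. rewrite rev_flatten -map_comp map_rev; congr (flatten (rev _)); apply: eq_map => i /=; exact: rev_nseq. Qed.

Theorem main_gen (adj : rel T) (t : mpq T) (pos : seq ({set T} * option (mpq T))) (a b : nat) :
  simple_graph adj -> is_MPQ_tree adj t -> inP (QN pos) (nodes t) ->
  1 <= a -> a < b -> b <= size pos -> (a, b) <> (1, size pos) ->
  exists v : T,
    v \in ((sec pos a.-1 :&: sec pos a) :\: sec pos b)
          :|: ((sec pos b :&: sec pos b.+1) :\: sec pos a).
Proof.
move=> _ [Hcnt [Hokt [_ [_ Heq]]]] HinQ Ha Hab Hb Hne.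
have HokQ := Hokt _ HinQ.
have Hc1t : forall v, cnt v t <= 1 by move=> v; rewrite /cnt Hcnt.
have Hc1 : forall v, cnt v (QN pos) <= 1 := fun v => leq_trans (sub_cnt v HinQ) (Hc1t v).
move: (HokQ) => [Hk [Hcons [H2s [_ [_ [Hb1 [Hbk [Hcc [Hd [He _]]]]]]]]]].
have [HZ|HZ] := eqVneq (((sec pos a.-1 :&: sec pos a) :\: sec pos b)
          :|: ((sec pos b :&: sec pos b.+1) :\: sec pos a)) set0; last first.
  by case/set0Pn: HZ => v Hv; exists v.
exfalso.
have NW : forall v, v \in sec pos a.-1 -> v \in sec pos a -> v \in sec pos b.
  move=> v H1 H2; apply/negPn/negP => H3.
  have : v \in set0 by rewrite -HZ !inE H1 H2 H3.
  by rewrite inE.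
have NW2 : forall v, v \in sec pos b -> v \in sec pos b.+1 -> v \in sec pos a.
  move=> v H1 H2; apply/negPn/negP => H3.
  have : v \in set0 by rewrite -HZ !inE H1 H2 H3 orbT.
  by rewrite inE.
case: (eqVneq a 1) => Ea.
  have Hbk' : b != size pos by apply/eqP => Eb; apply: Hne; rewrite Ea Eb.
  have Hr : 1 < b <= (size pos).-1 by apply/andP; clear -Ea Hbk' Hab Hb; lia.
  case/set0Pn: (He b Hr).1 => v; rewrite !inE => /andP [Hv1 /andP [Hv2 Hv3]].
  by move: (NW2 v Hv2 Hv3); rewrite Ea (negbTE Hv1).
case: (eqVneq b (size pos)) => Eb.
  have Hr : 1 < a <= (size pos).-1 by apply/andP; clear -Ea Eb Ha Hab; lia.
  case/set0Pn: (He a Hr).2 => v; rewrite !inE => /andP [Hv1 /andP [Hv2 Hv3]].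
  by move: (NW v Hv2 Hv3); rewrite Eb (negbTE Hv1).
have Ha2 : 2 <= a by clear -Ha Ea; lia.
have Hab' : a <= b := ltnW Hab.
have [o0 Ho0] := orderP_ex t.
have [Hu0 [Hm0 Hi0]] := (Heq o0).1 Ho0.
have [pre [suf [X [g [r [Eo0 [Hg [Hps [HX HG]]]]]]]]] := Lmain Hc1t Hokt HinQ Ho0.
set k := size pos in Hk Hb Hg HG Eb Hd He Hne.
set lo := lob k a b r.
set hi := hib k a b r.
have /andP [Hlo Hhi] : lo <= hi < k by apply: lohi.
set G := fun i => map (setU X) (nth [::] g i).
have HGi : forall i, i < k -> forall K0, K0 \in nth [::] g i ->
    exists2 K', K0 = sec pos (sgk k r i).+1 :|: K' & K' \subset vch pos (sgk k r i).+1.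
  by move=> i Hi; exact: (HG i Hi).2.
have EG : map (setU X) (flatten g) = flatten (map G (iota 0 lo)) ++
    flatten (map G (iota lo (hi.+1 - lo))) ++ flatten (map G (iota hi.+1 (k - hi.+1))).
  rewrite -{1}(mkseq_nth [::] g) Hg /mkseq map_flatten -map_comp (iota3 (leqW Hlo) Hhi).
  by rewrite !map_cat !flatten_cat.
set P := pre ++ flatten (map G (iota 0 lo)).
set B := flatten (map G (iota lo (hi.+1 - lo))).
set Q := flatten (map G (iota hi.+1 (k - hi.+1))) ++ suf.
have Eo0' : o0 = P ++ B ++ Q by rewrite Eo0 EG /P /Q -!catA.
set o' := P ++ rev B ++ Q.
have Hperm : perm_eq o' o0 by rewrite Eo0' perm_cat2l perm_cat2r perm_rev.
have HvW : forall v i K0, i < k -> K0 \in nth [::] g i -> v \in K0 -> v \in verts (QN pos).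
  move=> v i K0 Hi HK0; have [K' -> HK'] := HGi i Hi K0 HK0; rewrite inE => /orP [Hv|Hv].
    exact: (subsetP (secW pos _) v Hv).
  exact: (subsetP (vchW pos _) v (subsetP HK' v Hv)).
have Hgrp : forall v i i1 i2 K0 K10, i < k -> i1 < k -> i2 < k ->
    lo <= i <= hi -> ~~ (lo <= i1 <= hi) -> lo <= i2 <= hi ->
    K0 \in nth [::] g i -> K10 \in nth [::] g i1 -> v \in K0 -> v \in K10 ->
    v \in sec pos (sgk k r i2).+1.
  move=> v i i1 i2 K0 K10 Hi Hi1 Hi2 Hbi Hbi1 Hbi2 HK0 HK10 Hv Hv1.
  have [K' EK0 HK'] := HGi i Hi K0 HK0.
  have [K1' EK10 HK1'] := HGi i1 Hi1 K10 HK10.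
  move: (Hbi) (Hbi1) (Hbi2); rewrite !blk // => Hj Hj1 Hj2.
  have Hj1k : 1 <= (sgk k r i1).+1 <= k by apply: sgk_lt.
  move: Hv Hv1; rewrite EK0 EK10 !inE => /orP [Hv|Hv] /orP [Hv1|Hv1].
  - exact: (block_ok HokQ Ha Hab' Hb NW NW2 Hj1k Hj Hj1 Hv Hv1).
  - by case: ((vchN Hc1 (sgk k r i1)).1 v (subsetP (secN pos _) v Hv) (subsetP HK1' v Hv1)).
  - by case: ((vchN Hc1 (sgk k r i)).1 v (subsetP (secN pos _) v Hv1) (subsetP HK' v Hv)).
  - have Hne2 : sgk k r i1 != sgk k r i.
      apply/negP => /eqP E; move: Hj1; rewrite E Hj //.
    by case: ((vchN Hc1 (sgk k r i)).2 _ Hne2 v (subsetP HK1' v Hv1) (subsetP HK' v Hv)).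
have Hcond : forall v : T, has (fun K : {set T} => v \in K) B -> has (fun K : {set T} => v \in K) (P ++ Q) ->
    all (fun K : {set T} => v \in K) B.
  move=> v /hasP [K HK HvK] /hasP [K1 HK1 HvK1]; apply/allP => K2 HK2.
  move: HK => /flattenP [l0 /mapP [i Hi El0] HK]; subst l0; move: HK => /mapP [K0 HK0 EK]; subst K.
  move: HK2 => /flattenP [l0 /mapP [i2 Hi2 El0] HK]; subst l0; move: HK => /mapP [K20 HK20 EK]; subst K2.
  rewrite mem_iota in Hi; rewrite mem_iota in Hi2.
  have Hik : i < k by clear -Hi Hhi; lia.
  have Hi2k : i2 < k by clear -Hi2 Hhi; lia.
  have Hbi : lo <= i <= hi by apply/andP; clear -Hi; lia.
  have Hbi2 : lo <= i2 <= hi by apply/andP; clear -Hi2; lia.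
  rewrite inE; case HvX: (v \in X) => //=.
  move: HvK; rewrite inE HvX /= => HvK0.
  have [K2' EK2 HK2'] := HGi i2 Hi2k K20 HK20.
  rewrite EK2 inE; apply/orP; left.
  move: HK1; rewrite !mem_cat => /orP [/orP [Hpre|Hg1]|/orP [Hg3|Hsuf]].
  - have HK1' : K1 \in pre ++ suf by rewrite mem_cat Hpre.
    by case: (Hps K1 HK1' v HvK1 (HvW v i K0 Hik HK0 HvK0)).
  - move: Hg1 => /flattenP [l0 /mapP [i1 Hi1 El0] HK]; subst l0; move: HK => /mapP [K10 HK10 EK]; subst K1.
    rewrite mem_iota in Hi1; move: HvK1; rewrite inE HvX /= => HvK1.
    apply: (Hgrp v i i1 i2 K0 K10 Hik _ Hi2k Hbi _ Hbi2 HK0 HK10 HvK0 HvK1); first by clear -Hi1 Hlo Hhi; lia.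
    rewrite negb_and -!ltnNge; apply/orP; clear -Hi1; lia.
  - move: Hg3 => /flattenP [l0 /mapP [i1 Hi1 El0] HK]; subst l0; move: HK => /mapP [K10 HK10 EK]; subst K1.
    rewrite mem_iota in Hi1; move: HvK1; rewrite inE HvX /= => HvK1.
    apply: (Hgrp v i i1 i2 K0 K10 Hik _ Hi2k Hbi _ Hbi2 HK0 HK10 HvK0 HvK1); first by clear -Hi1 Hhi; lia.
    rewrite negb_and -!ltnNge; apply/orP; clear -Hi1; lia.
  - have HK1' : K1 \in pre ++ suf by rewrite mem_cat Hsuf orbT.
    by case: (Hps K1 HK1' v HvK1 (HvW v i K0 Hik HK0 HvK0)).
have Hco' : consec_clique_order adj o'.
  split; first by rewrite (perm_uniq Hperm).
  split; first by move=> K; rewrite (perm_mem Hperm) Hm0.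
  apply: of_conv => v.
  move: (conv_of Hi0) => Hcv0.
  set f := fun K : {set T} => v \in K.
  have Hcv : convex (map f P ++ map f B ++ map f Q) by rewrite -!map_cat -Eo0'; exact: Hcv0.
  have -> : map f o' = map f P ++ rev (map f B) ++ map f Q by rewrite /o' !map_cat map_rev.
  apply: conv_rev Hcv _.
  rewrite -map_cat !has_map all_map; exact: Hcond.
have Ho' : orderP t o' := (Heq o').2 Hco'.
have [pre2 [suf2 [X2 [g2 [r2 [Eo' [Hg2 [Hps2 [HX2 HG2]]]]]]]]] := Lmain Hc1t Hokt HinQ Ho'.
set m := fun i => size (nth [::] g i).
set xs := fun i => sec pos (sgk k r i).+1.
set m2 := fun i => size (nth [::] g2 i).
set xs2 := fun i => sec pos (sgk k r2 i).+1.
have HFG : forall i, F pos (G i) = nseq (m i) (xs i).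
  move=> i; case: (ltnP i k) => Hik.
    exact: (F_group Hc1 HokQ HX (sgk_lt r Hik) (HGi i Hik)).
  by rewrite /G /m nth_default ?Hg.
have HFG2 : forall i, F pos (map (setU X2) (nth [::] g2 i)) = nseq (m2 i) (xs2 i).
  move=> i; case: (ltnP i k) => Hik.
    exact: (F_group Hc1 HokQ HX2 (sgk_lt r2 Hik) ((HG2 i Hik).2)).
  by rewrite /m2 nth_default ?Hg2.
set NS := fun i => nseq (m i) (xs i).
set NS2 := fun i => nseq (m2 i) (xs2 i).
set Lz := iota 0 lo ++ rev (iota lo (hi.+1 - lo)) ++ iota hi.+1 (k - hi.+1).
have Fo1 : F pos o' = flatten (map NS Lz).
  rewrite /o' /P /B /Q !F_cat F_rev (F_nil (o := pre)); last by move=> K HK; apply: Hps; rewrite mem_cat HK.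
  rewrite (F_nil (o := suf)); last by move=> K HK; apply: Hps; rewrite mem_cat HK orbT.
  rewrite !F_flatten !(eq_map HFG) rev_flat_nseq cats0 /Lz !map_cat !flatten_cat.
  done.
have Fo2 : F pos o' = flatten (map NS2 (iota 0 k)).
  rewrite Eo' !F_cat (F_nil (o := pre2)); last by move=> K HK; apply: Hps2; rewrite mem_cat HK.
  rewrite (F_nil (o := suf2)); last by move=> K HK; apply: Hps2; rewrite mem_cat HK orbT.
  rewrite -{1}(mkseq_nth [::] g2) Hg2 /mkseq map_flatten -map_comp F_flatten cats0 /=.
  by congr flatten; apply: eq_map => i /=; rewrite HFG2.
have Hm : forall i, i \in Lz -> 0 < m i.
  move=> i Hi.
  have Hik : i < k by move: Hi; rewrite /Lz !mem_cat mem_rev !mem_iota; clear -Hlo Hhi; lia.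
  by have [[K HK] _] := HG i Hik; rewrite /m; case: (nth [::] g i) HK.
have Hm2 : forall i, i \in iota 0 k -> 0 < m2 i.
  move=> i; rewrite mem_iota add0n => /= Hik.
  by have [[K HK] _] := HG2 i Hik; rewrite /m2; case: (nth [::] g2 i) HK.
have C1 := (cmp_flatten xs Hm).1.
have C2 := (cmp_flatten xs2 Hm2).1.
have Hadj : cmp (map xs2 (iota 0 k)) = map xs2 (iota 0 k).
  apply: (cmp_id (x0 := set0)) => p; rewrite size_map size_iota => Hp.
  rewrite !(nth_map 0) ?size_iota ?nth_iota //; try (clear -Hp; lia).
  rewrite /xs2 /sgk add0n; case: (r2).
  - have Hd' := Hd (k.-1 - p) _.
    rewrite (_ : (k.-1 - p).+1 = (k.-1 - p.+1).+2); last by clear -Hp; lia.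
    rewrite (_ : (k.-1 - p.+1).+1 = (k.-1 - p.+1).+2.-1) // eq_sym; apply: Hd; clear -Hp; apply/andP; lia.
  - by apply: Hd; clear -Hp; apply/andP; lia.
have Ecmp : cmp (map xs Lz) = map xs2 (iota 0 k) by rewrite -C1 -Fo1 Fo2 C2 Hadj.
have Esz : size (map xs Lz) = k.
  by rewrite size_map /Lz !size_cat size_rev !size_iota; clear -Hlo Hhi; lia.
have Eseq : map xs Lz = map xs2 (iota 0 k).
  case: (cmp_size (map xs Lz)) => [<-//|].
  by rewrite Ecmp Esz size_map size_iota ltnn.
have Hnth : forall p, p < k -> xs (pig k a b r p) = xs2 p.
  move=> p Hp; have := congr1 (fun s => nth set0 s p) Eseq => /=.
  have HLz : p < size Lz by rewrite -(size_map xs) Esz.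
  rewrite (nth_map 0 _ _ HLz) (nth_map 0) ?size_iota // nth_iota // add0n /Lz nthLz //; last by apply/andP.
case: (eqVneq r2 r) => Er.
  apply: (palin HokQ (leqnn (b - a)) Ha Hab Hb).
  move=> j Hj; have [E1 [E2 E3]] := A1 r Ha Hab Hb Hj.
  by have := Hnth _ E3; rewrite /xs /xs2 Er E1 E2.
have Er2 : r2 = ~~ r by case: (r) (r2) Er => -[].
have [E1 [E2 E3]] := A2 r Ha2 Hab Hb.
have := Hnth _ E3; rewrite /xs /xs2 Er2 E1 E2.
exact: (S1k HokQ).
Qed.

End Main.

Unset Implicit Arguments.

Theorem mainTheorem13 (n : nat) (adj : rel 'I_n) (t : mpq 'I_n)
    (pos : seq ({set 'I_n} * option (mpq 'I_n))) (a b : nat) :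
  simple_graph adj -> is_MPQ_tree adj t -> inP (QN pos) (nodes t) ->
  1 <= a -> a < b -> b <= size pos -> (a, b) <> (1, size pos) ->
  exists v : 'I_n,
    v \in ((sec pos a.-1 :&: sec pos a) :\: sec pos b)
          :|: ((sec pos b :&: sec pos b.+1) :\: sec pos a).
Proof. exact: main_gen. Qed.
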